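(* Consider a physically realizable annihilation operator plant \[ da = F a\,dt + G_w\, d\mathcal{W} + G_u\, d\mathcal{U},\qquad d\mathcal{Y} = H a\,dt + K\, d\mathcal{W}, \] with augmented (unused) output $d\mathcal{\tilde Y} = \tilde H a\,dt + \tilde K d\mathcal{W} + \bar K d\mathcal{U}$, and a physical cost output \[ d\mathcal{Z} = L\begin{bmatrix} d\mathcal{Y}\\ d\mathcal{\tilde Y}\end{bmatrix}, \] where $L$ is a matrix whose columns are standard unit vectors (so that $L^\dagger L = I$). Then the trivial controller $d\mathcal{U} = d\mathcal{\tilde W}$ is always an optimal solution to the corresponding coherent $H^\infty$ quantum optimal control problem.
   Context: $a$ is a vector of annihilation operators with $[a,a^\dagger]=\Theta$, $\Theta>0$; $\mathcal{W}$, $\mathcal{U}$, $\mathcal{\tilde W}$, $\mathcal{Y}$, $\mathcal{\tilde Y}$ are vectors of bosonic field operators. A system $da = F a\,dt + G\,d\mathcal{A}$, $d\mathcal{A}^{out} = H a\,dt + K\,d\mathcal{A}$ is physically realizable iff there is a complex matrix $\Theta>0$ with $F\Theta+\Theta F^\dagger + GG^\dagger = 0$, $G=-\Theta H^\dagger$, $K=I$. The plant is physically realizable if the system with input $(\mathcal{W},\mathcal{U})$ and output $(\mathcal{Y},\mathcal{\tilde Y})$ is physically realizable (in particular its feedthrough $\begin{bmatrix}K&0\\ \tilde K&\bar K\end{bmatrix}$ is the identity). A coherent controller is a quantum linear system $da_c = F_c a_c\,dt + G_{cw}\,d\mathcal{\tilde W} + G_{cy}\,d\mathcal{Y}$, $d\mathcal{U}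 = H_c a_c\,dt + K_{cw}\,d\mathcal{\tilde W} + K_{cy}\,d\mathcal{Y}$, with controller quantum noise input $\mathcal{\tilde W}$ (of the same dimension as $\mathcal{U}$ for the trivial controller $d\mathcal{U}=d\mathcal{\tilde W}$ to make sense); it is physically realizable if it can be augmented by an additional (unused) output $d\mathcal{\tilde U}$ so that the system from $(\mathcal{\tilde W},\mathcal{Y})$ to $(\mathcal{U},\mathcal{\tilde U})$ is physically realizable. The coherent $H^\infty$ problem is to minimize the $H^\infty$ norm $\|\Gamma_{cl}\|_\infty$ of the closed-loop transfer function from all noise inputs $(\mathcal{W},\mathcal{\tilde W})$ (including the controller noises) to $\mathcal{Z}$, over all physically realizable controllers for which the closed-loop system is internally stable. *)

(* Defs.v *)
From HB Require Import structures.
From mathcomp Require Import all_boot all_order all_algebra.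
From mathcomp Require Import complex.
From mathcomp Require Import boolp classical_sets reals constructive_ereal ereal.
Set Implicit Arguments. Unset Strict Implicit. Unset Printing Implicit Defensive.
Import Order.TTheory GRing.Theory Num.Theory.
Local Open Scope ring_scope.

Section Defs.
Variable R : realType.
Local Notation C := (R[i]).

Definition adj (m n : nat) (A : 'M[C]_(m, n)) : 'M[C]_(n, m) := (map_mx conjc A)^T.

Definition posdef (n : nat) (T : 'M[C]_n) : Prop :=
  adj T = T /\ forall v : 'cV[C]_n, v != 0 -> 0 < (adj v *m T *m v) 0 0.

(* Physical realizability of  da = F a dt + G dA,  dA_out = H a dt + K dA
   (m-dimensional input and output fields):
   exists Theta > 0 with F Theta + Theta F^dag + G G^dag = 0, G = - Theta H^dag, K = I. *)
Definition phys_realizable_sq (n m : nat) (F : 'M[C]_n) (G : 'M[C]_(n, m))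
  (H : 'M[C]_(m, n)) (K : 'M[C]_m) : Prop :=
  exists Theta : 'M[C]_n, [/\ posdef Theta,
    F *m Theta + Theta *m adj F + G *m adj G = 0,
    G = - (Theta *m adj H) &
    K = 1%:M].

(* general dimensions: K = I forces the output dimension p to equal the input
   dimension m; the matrices are then read as square ones. *)
Definition phys_realizable (n m p : nat) (F : 'M[C]_n) (G : 'M[C]_(n, m))
  (H : 'M[C]_(p, n)) (K : 'M[C]_(p, m)) : Prop :=
  exists e : p = m,
    phys_realizable_sq F G (castmx (e, erefl n) H) (castmx (e, erefl m) K).

Definition vnorm (k : nat) (v : 'cV[C]_k) : R :=
  Num.sqrt (\sum_i ((complex.Re (v i 0)) ^+ 2 + (complex.Im (v i 0)) ^+ 2)).

Definition tf (k m p : nat) (A : 'M[C]_k) (B : 'M[C]_(k, m)) (Cm : 'M[C]_(p, k))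
  (D : 'M[C]_(p, m)) (s : C) : 'M[C]_(p, m) :=
  Cm *m invmx (s%:M - A) *m B + D.

(* H-infinity norm: sup over real frequencies w of the largest singular
   value of the transfer function at s = i w (induced 2-norm). *)
Definition hinf_norm (k m p : nat) (A : 'M[C]_k) (B : 'M[C]_(k, m))
  (Cm : 'M[C]_(p, k)) (D : 'M[C]_(p, m)) : \bar R :=
  ereal_sup [set r : \bar R | exists (w : R) (v : 'cV[C]_m),
      vnorm v = 1 /\ r = (vnorm (tf A B Cm D (Complex 0 w) *m v))%:E]%classic.

Definition hurwitz (k : nat) (A : 'M[C]_k) : Prop :=
  forall lambda : C, eigenvalue A lambda -> complex.Re lambda < 0.

(* Plant
     da  = F a dt + Gw dW + Gu dU
     dY  = H a dt + K dW
     dY~ = Ht a dt + Kt dW + Kbar dU      (augmented, unused output)     *)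
Record plant (n nw nu ny nyt : nat) := Plant {
  pF : 'M[C]_n; pGw : 'M[C]_(n, nw); pGu : 'M[C]_(n, nu);
  pH : 'M[C]_(ny, n); pK : 'M[C]_(ny, nw);
  pHt : 'M[C]_(nyt, n); pKt : 'M[C]_(nyt, nw); pKbar : 'M[C]_(nyt, nu) }.

Definition plant_pr n nw nu ny nyt (P : plant n nw nu ny nyt) : Prop :=
  phys_realizable (pF P) (row_mx (pGw P) (pGu P)) (col_mx (pH P) (pHt P))
    (block_mx (pK P) 0 (pKt P) (pKbar P)).

(* Coherent controller with nc modes, noise input W~ (dim nu), input Y:
     da_c = Fc a_c dt + Gcw dW~ + Gcy dY
     dU   = Hc a_c dt + Kcw dW~ + Kcy dY                                  *)
Record controller (nu ny : nat) := Controller {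
  nc : nat; cF : 'M[C]_nc; cGw : 'M[C]_(nc, nu); cGy : 'M[C]_(nc, ny);
  cH : 'M[C]_(nu, nc); cKw : 'M[C]_nu; cKy : 'M[C]_(nu, ny) }.

(* physical realizability: some augmentation by an extra output dU~ makes the
   system (W~,Y) -> (U,U~) physically realizable *)
Definition controller_pr nu ny (c : controller nu ny) : Prop :=
  exists (nut : nat) (Ht : 'M[C]_(nut, nc c)) (Ktw : 'M[C]_(nut, nu))
         (Kty : 'M[C]_(nut, ny)),
    phys_realizable (cF c) (row_mx (cGw c) (cGy c)) (col_mx (cH c) Ht)
      (block_mx (cKw c) (cKy c) Ktw Kty).

(* the trivial controller dU = dW~ (no modes) *)
Definition trivial_controller nu ny : controller nu ny :=
  @Controller nu ny 0 0 0 0 0 1%:M 0.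

(* Closed loop, state (a, a_c), inputs (W, W~), output
   dZ = L [dY; dY~].  Substituting dY = H a dt + K dW and dU:
     dU = Kcy H a dt + Hc a_c dt + Kcy K dW + Kcw dW~                    *)
Section ClosedLoop.
Variables (n nw nu ny nyt nz : nat) (P : plant n nw nu ny nyt)
  (L : 'M[C]_(nz, ny + nyt)) (c : controller nu ny).
Local Notation F := (pF P). Local Notation Gw := (pGw P).
Local Notation Gu := (pGu P). Local Notation H := (pH P).
Local Notation K := (pK P). Local Notation Ht := (pHt P).
Local Notation Kt := (pKt P). Local Notation Kbar := (pKbar P).

Definition cl_A : 'M[C]_(n + nc c) :=
  block_mx (F + Gu *m cKy c *m H) (Gu *m cH c) (cGy c *m H) (cF c).
Definition cl_B : 'M[C]_(n + nc c, nw + nu) :=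
  block_mx (Gw + Gu *m cKy c *m K) (Gu *m cKw c) (cGy c *m K) (cGw c).
Definition cl_C : 'M[C]_(nz, n + nc c) :=
  L *m block_mx H 0 (Ht + Kbar *m cKy c *m H) (Kbar *m cH c).
Definition cl_D : 'M[C]_(nz, nw + nu) :=
  L *m block_mx K 0 (Kt + Kbar *m cKy c *m K) (Kbar *m cKw c).

Definition cl_internally_stable : Prop := hurwitz cl_A.
Definition cl_hinf : \bar R := hinf_norm cl_A cl_B cl_C cl_D.
End ClosedLoop.

Definition unit_columns (p q : nat) (L : 'M[C]_(p, q)) : Prop :=
  forall j : 'I_q, exists i : 'I_p, col j L = delta_mx i 0.
End Defs.

(* Main.v *)
Require Import Defs.
From HB Require Import structures.
From mathcomp Require Import all_boot all_order all_algebra.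
From mathcomp Require Import complex.
From mathcomp Require Import boolp classical_sets reals constructive_ereal ereal.
From mathcomp Require Import lra.
Import Order.TTheory GRing.Theory Num.Theory.
Local Open Scope ring_scope. Local Open Scope complex_scope.

Set Implicit Arguments. Unset Strict Implicit. Unset Printing Implicit Defensive.
Section Aux.
Variable R : realType.
Local Notation C := (R[i]).
Implicit Types (m n p : nat).

Lemma adjM m n p (A : 'M[C]_(m, n)) (B : 'M[C]_(n, p)) :
  adj (A *m B) = adj B *m adj A.
Proof. by rewrite /adj map_mxM trmx_mul. Qed.
Lemma adjD m n (A B : 'M[C]_(m, n)) : adj (A + B) = adj A + adj B.
Proof. by rewrite /adj map_mxD linearD. Qed.
Lemma adjN m n (A : 'M[C]_(m, n)) : adj (- A) = - adj A.
Proof. by rewrite /adj map_mxN linearN. Qed.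
Lemma adjK m n (A : 'M[C]_(m, n)) : adj (adj A) = A.
Proof.
by apply/matrixP => i j; rewrite /adj !mxE conjcK.
Qed.
Lemma adj_scalar n (a : C) : adj (a%:M : 'M_n) = (a^*)%C%:M.
Proof.
apply/matrixP => i j; rewrite /adj !mxE eq_sym.
by case: (i == j); rewrite ?mulr1n ?mulr0n ?conjc0.
Qed.
Lemma adj1 n : adj (1%:M : 'M[C]_n) = 1%:M.
Proof. by rewrite adj_scalar conjc1. Qed.
Lemma adj0 m n : adj (0 : 'M[C]_(m, n)) = 0.
Proof. by apply/matrixP => i j; rewrite /adj !mxE conjc0. Qed.
Lemma adj_block m1 m2 n1 n2 (A : 'M[C]_(m1, n1)) (B : 'M[C]_(m1, n2))
   (Cc : 'M[C]_(m2, n1)) (D : 'M[C]_(m2, n2)) :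
  adj (block_mx A B Cc D) = block_mx (adj A) (adj Cc) (adj B) (adj D).
Proof. by rewrite /adj map_block_mx tr_block_mx. Qed.

Lemma lossless_sq k m (A : 'M[C]_k) (B : 'M[C]_(k, m)) (Cm : 'M[C]_(m, k)) (s : C) :
  phys_realizable_sq A B Cm 1%:M -> s + (s^*)%C = 0 -> (s%:M - A) \in unitmx ->
  adj (tf A B Cm 1%:M s) *m tf A B Cm 1%:M s = 1%:M.
Proof.
move=> [T [[hT _] hA hB _]] hs hU.
set X := s%:M - A; set Phi := invmx X.
have hPl : Phi *m X = 1%:M by rewrite mulVmx.
have hPr : X *m Phi = 1%:M by rewrite mulmxV.
have hB' : adj B = - (Cm *m T) by rewrite hB adjN adjM adjK hT.
have hBB : B *m adj B = X *m T + T *m adj X.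
  have hs' : (s^*)%C = - s by apply/eqP; rewrite -addr_eq0 addrC hs.
  have e1 : B *m adj B = - (A *m T + T *m adj A).
    by apply/eqP; rewrite -addr_eq0 addrC hA.
  rewrite e1 /X adjD adjN adj_scalar hs' mulmxBl mulmxDr mulmxN scalar_mxC.
  by rewrite !mul_scalar_mx scaleNr addrACA addrN add0r opprD.
have key : Phi *m (B *m adj B) *m adj Phi = Phi *m T + T *m adj Phi.
  rewrite hBB mulmxDr mulmxDl !mulmxA hPl mul1mx -!mulmxA -adjM hPl adj1 mulmx1.
  by rewrite addrC.
apply: mulmx1C.
rewrite /tf -/X -/Phi adjD adj1 !adjM mulmxDl mulmxDr mulmxDr !mul1mx mulmx1.
have -> : Cm *m Phi *m B *m (adj B *m (adj Phi *m adj Cm)) =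
   Cm *m (Phi *m (B *m adj B) *m adj Phi) *m adj Cm by rewrite !mulmxA.
rewrite key hB' {1}hB.
rewrite mulmxDr mulmxDl mulmxN mulNmx !mulmxA addrA.
by rewrite [X in X - _ - _ + _](addrC) addrK addrN add0r.
Qed.



Definition nm (z : C) : R := Normc.normc z.
Lemma nm_sq (z : C) : nm z ^+ 2 = complex.Re z ^+ 2 + complex.Im z ^+ 2.
Proof. by case: z => a b; rewrite /nm /= sqr_sqrtr // addr_ge0 ?sqr_ge0. Qed.
Lemma nm_ge0 (z : C) : 0 <= nm z.
Proof. by case: z => a b; rewrite /nm /= sqrtr_ge0. Qed.
Lemma conj_mul (z : C) : (z^* * z)%C = (complex.Re z ^+ 2 + complex.Im z ^+ 2)%:C.
Proof.
case: z => a b; rewrite /= /GRing.mul /= /GRing.exp /=.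
apply/eqP; rewrite eq_complex /=; apply/andP; split; apply/eqP.
  by rewrite mulNr opprK.
by rewrite mulNr [a * b]mulrC addrN.
Qed.
Lemma vnorm_ge0 k (v : 'cV[C]_k) : 0 <= vnorm v.
Proof. by rewrite /vnorm sqrtr_ge0. Qed.
Lemma vnorm_sq k (v : 'cV[C]_k) :
  vnorm v ^+ 2 = \sum_i (complex.Re (v i 0) ^+ 2 + complex.Im (v i 0) ^+ 2).
Proof. by rewrite /vnorm sqr_sqrtr // sumr_ge0 // => i _; rewrite addr_ge0 ?sqr_ge0. Qed.
Lemma adj_vv k (v : 'cV[C]_k) : (adj v *m v) 0 0 = (vnorm v ^+ 2)%:C.
Proof.
rewrite vnorm_sq mxE rmorph_sum; apply: eq_bigr => i _.
by rewrite /adj !mxE conj_mul.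
Qed.
Lemma vnorm_iso k m (M : 'M[C]_(m, k)) (v : 'cV[C]_k) :
  adj M *m M = 1%:M -> vnorm (M *m v) = vnorm v.
Proof.
move=> H; have : (vnorm (M *m v) ^+ 2)%:C = (vnorm v ^+ 2)%:C.
  by rewrite -!adj_vv adjM -mulmxA (mulmxA (adj M)) H mul1mx.
move/complexI/eqP; rewrite eqrXn2 // ?vnorm_ge0 //; exact/eqP.
Qed.

Lemma hurwitz_unit k (A : 'M[C]_k) w : hurwitz A -> (Complex 0 w)%:M - A \in unitmx.
Proof.
move=> hA; apply: contraT => hn.
have : eigenvalue A (Complex 0 w).
  rewrite /eigenvalue /eigenspace kermx_eq0 row_free_unit.
  by rewrite -opprB -scaleN1r unitmxE detZ unitrMr ?unitrX ?unitrN1 // -unitmxE.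
by move/hA; rewrite /= ltxx.
Qed.

Lemma nm_sum (I : finType) (F : I -> C) : nm (\sum_i F i) <= \sum_i nm (F i).
Proof.
apply: (big_ind2 (fun a b => nm a <= b)) => //.
- by rewrite /nm Normc.normc0.
- move=> x1 x2 y1 y2 h1 h2; apply: le_trans (le_normcD _ _) _; exact: lerD.
Qed.
Lemma nmM (x y : C) : nm (x * y) = nm x * nm y.
Proof. exact: Normc.normcM. Qed.
Lemma nmD (x y : C) : nm (x + y) <= nm x + nm y.
Proof. exact: le_normcD. Qed.
Lemma nmN (x : C) : nm (- x) = nm x.
Proof. exact: normcN. Qed.

Lemma le_sum1 (I : finType) (F : I -> R) j : (forall i, 0 <= F i) -> F j <= \sum_i F i.
Proof.
move=> h; rewrite (bigD1 j) //= lerDl sumr_ge0 // => i _; exact: h.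
Qed.

Definition l1 k (x : 'cV[C]_k) : R := \sum_i nm (x i 0).
Definition mnm p q (M : 'M[C]_(p, q)) : R := \sum_i \sum_j nm (M i j).
Lemma l1_ge0 k (x : 'cV[C]_k) : 0 <= l1 x.
Proof. by apply: sumr_ge0 => i _; exact: nm_ge0. Qed.
Lemma mnm_ge0 p q (M : 'M[C]_(p, q)) : 0 <= mnm M.
Proof. by apply: sumr_ge0 => i _; apply: sumr_ge0 => j _; exact: nm_ge0. Qed.

Lemma l1_mul p q (M : 'M[C]_(p, q)) (x : 'cV[C]_q) : l1 (M *m x) <= mnm M * l1 x.
Proof.
rewrite /l1 /mnm mulr_suml.
apply: ler_sum => i _; rewrite mxE mulr_suml.
apply: le_trans (nm_sum _) _; apply: ler_sum => j _.
rewrite nmM; apply: ler_wpM2l; first exact: nm_ge0.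
apply: (@le_sum1 _ (fun i => nm (x i 0)) j) => i0; exact: nm_ge0.
Qed.

Lemma nm_iw (w : R) : 0 <= w -> nm (Complex 0 w) = w.
Proof. by move=> hw; rewrite /nm /= expr0n /= add0r sqrtr_sqr ger0_norm. Qed.

Lemma l1D k (x y : 'cV[C]_k) : l1 (x + y) <= l1 x + l1 y.
Proof. rewrite /l1 -big_split /=; apply: ler_sum => i _; rewrite mxE; exact: nmD. Qed.

Lemma est k m (A : 'M[C]_k) (B : 'M[C]_(k, m)) (v : 'cV[C]_m) (w : R) :
  0 <= w -> (Complex 0 w)%:M - A \in unitmx ->
  w * l1 (invmx ((Complex 0 w)%:M - A) *m (B *m v)) <=
  mnm A * l1 (invmx ((Complex 0 w)%:M - A) *m (B *m v)) + l1 (B *m v).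
Proof.
move=> hw hU; set s := Complex 0 w; set x := invmx _ *m _.
have h1 : (s%:M - A) *m x = B *m v by rewrite /x mulmxA mulmxV // mul1mx.
have h2 : s *: x = A *m x + B *m v.
  by rewrite -h1 mulmxBl mul_scalar_mx addrC subrK.
have h3 : w * l1 x = l1 (s *: x).
  rewrite /l1 mulr_sumr; apply: eq_bigr => i _; by rewrite [in RHS]mxE nmM nm_iw.
rewrite h3 h2; apply: le_trans (l1D _ _) _; apply: lerD => //; exact: l1_mul.
Qed.

Lemma pert k (d y : 'cV[C]_k) : vnorm d = 1 -> 1 - 2 * l1 y <= vnorm (d + y) ^+ 2.
Proof.
move=> hd.
have hs : forall z : 'cV[C]_k, vnorm z ^+ 2 = \sum_i nm (z i 0) ^+ 2.
  by move=> z; rewrite vnorm_sq; apply: eq_bigr => i _; rewrite nm_sq.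
have ha : forall i, nm (d i 0) <= 1.
  move=> i; have : nm (d i 0) ^+ 2 <= 1.
    rewrite -(expr1n _ 2) -hd hs.
    by apply: (@le_sum1 _ (fun i => nm (d i 0) ^+ 2) i) => i0; exact: sqr_ge0.
  have := nm_ge0 (d i 0); nra.
rewrite -(expr1n _ 2) -{1}hd !hs /l1 mulr_sumr -sumrB; apply: ler_sum => i _.
rewrite mxE.
have hc : nm (d i 0) <= nm (d i 0 + y i 0) + nm (y i 0).
  rewrite -(nmN (y i 0)); apply: le_trans (nmD _ _); by rewrite addrK.
have := ha i; have := nm_ge0 (d i 0); have := nm_ge0 (y i 0);
have := nm_ge0 (d i 0 + y i 0); move: hc.
set a := nm (d i 0); set b := nm (y i 0); set c := nm (_ + _).
move=> hc hc0 hb0 ha0 ha1.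
have [hab|hab] := lerP b a; nra.
Qed.

Lemma sup_ge1 (S : set (\bar R)) :
  (forall r : R, r < 1 -> exists2 y, S y & (r%:E <= y)%E) -> (1%:E <= ereal_sup S)%E.
Proof.
move=> h; rewrite leNgt; apply/negP => hlt.
have ub := @ereal_sup_ubound R S.
move: hlt ub; case: (ereal_sup S) => [x| |] //= hlt ub.
- rewrite lte_fin in hlt.
  have [y Sy hy] := h ((x + 1) / 2) ltac:(lra).
  have := le_trans hy (ub _ Sy); rewrite lee_fin; lra.
- have [y Sy hy] := h 0 ltr01.
  by have := le_trans hy (ub _ Sy).
Qed.

Lemma lower k m p (A : 'M[C]_k) (B : 'M[C]_(k, m)) (Cm : 'M[C]_(p, k))
   (D : 'M[C]_(p, m)) (v : 'cV[C]_m) :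
  hurwitz A -> adj D *m D = 1%:M -> vnorm v = 1 -> (1%:E <= hinf_norm A B Cm D)%E.
Proof.
move=> hA hD hv; apply: sup_ge1 => r hr.
have hDv : vnorm (D *m v) = 1 by rewrite vnorm_iso.
have [hr0|hr0] := lerP r 0.
  exists (vnorm (tf A B Cm D (Complex 0 0) *m v))%:E; first by exists 0, v.
  by rewrite lee_fin; apply: le_trans hr0 (vnorm_ge0 _).
set eps := (1 - r ^+ 2) / 2.
have he : 0 < eps by rewrite /eps; nra.
set al := mnm A; set be := l1 (B *m v); set ga := mnm Cm.
have hal : 0 <= al := mnm_ge0 A. have hbe : 0 <= be := l1_ge0 (B *m v). have hga : 0 <= ga := mnm_ge0 Cm.
set q := ga * be / eps.
have hq0 : 0 <= q by rewrite /q; apply: divr_ge0; [exact: mulr_ge0|exact: ltW].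
have hq : q * eps = ga * be by rewrite /q divfK // gt_eqF.
set w := al + 1 + q.
have hw : 0 <= w by rewrite /w; lra.
exists (vnorm (tf A B Cm D (Complex 0 w) *m v))%:E; first by exists w, v.
rewrite lee_fin.
have hU := hurwitz_unit w hA.
have he1 := est B v hw hU.
move: he1; set x := invmx ((Complex 0 w)%:M - A) *m (B *m v); move=> he1.
have hT : tf A B Cm D (Complex 0 w) *m v = D *m v + Cm *m x.
  by rewrite /tf mulmxDl addrC !mulmxA.
have hx0 := l1_ge0 x.
have hCx := l1_mul Cm x.
have hl1 : l1 (Cm *m x) <= eps.
  apply: le_trans hCx _.
  move: he1; rewrite /w => he1.
  have h2 : ga * l1 x + q * (ga * l1 x) <= q * eps.
    rewrite hq; rewrite -/be -/al in he1. have h3 : l1 x + q * l1 x <= be by lra. have h4 := ler_wpM2l hga h3. lra.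
  rewrite -/ga; nra.
have := pert (Cm *m x) hDv; rewrite -hT => hp.
have := vnorm_ge0 (tf A B Cm D (Complex 0 w) *m v).
set vn := vnorm _ in hp *; move=> hvn.
have : r ^+ 2 <= vn ^+ 2 by rewrite /eps in hl1; nra.
nra.
Qed.

Lemma adj_col m1 m2 n (A : 'M[C]_(m1, n)) (B : 'M[C]_(m2, n)) :
  adj (col_mx A B) = row_mx (adj A) (adj B).
Proof. by rewrite /adj map_col_mx tr_col_mx. Qed.
Lemma adj_row m n1 n2 (A : 'M[C]_(m, n1)) (B : 'M[C]_(m, n2)) :
  adj (row_mx A B) = col_mx (adj A) (adj B).
Proof. by rewrite /adj map_row_mx tr_row_mx. Qed.
Lemma adjZ m n (a : C) (A : 'M[C]_(m, n)) : adj (a *: A) = (a^*)%C *: adj A.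
Proof. by apply/matrixP => i j; rewrite /adj !mxE rmorphM. Qed.

Lemma vnorm_eq0 k (x : 'cV[C]_k) : vnorm x = 0 -> x = 0.
Proof.
move=> h; have h2 : vnorm x ^+ 2 = 0 by rewrite h expr0n.
rewrite vnorm_sq in h2.
apply/matrixP => i j; rewrite ord1 mxE.
have := psumr_eq0P (fun i _ => addr_ge0 (sqr_ge0 (complex.Re (x i 0))) (sqr_ge0 (complex.Im (x i 0)))) h2 (i := i) isT.
move/eqP; rewrite paddr_eq0 ?sqr_ge0 // !sqrf_eq0 => /andP[/eqP h1 /eqP h3].
by case: (x i 0) h1 h3 => a b /= -> ->.
Qed.

Lemma lossless k m p (A : 'M[C]_k) (B : 'M[C]_(k, m)) (Cm : 'M[C]_(p, k))
  (D : 'M[C]_(p, m)) (w : R) :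
  phys_realizable A B Cm D -> (Complex 0 w)%:M - A \in unitmx ->
  adj (tf A B Cm D (Complex 0 w)) *m tf A B Cm D (Complex 0 w) = 1%:M.
Proof.
case=> e; move: B D; case: m / e => B D; rewrite !castmx_id => h hU.
have hD : D = 1%:M by case: h => T [].
rewrite hD; apply: lossless_sq => //; first by rewrite -hD.
by apply/eqP; rewrite eq_complex /= addr0 subrr !eqxx.
Qed.

Lemma pr_ext k m p (A : 'M[C]_k) (B : 'M[C]_(k, m)) (Cm : 'M[C]_(p, k))
  (D : 'M[C]_(p, m)) :
  phys_realizable A B Cm D ->
  phys_realizable (block_mx A 0 0 (0 : 'M[C]_0)) (col_mx B (0 : 'M[C]_(0, m)))
    (row_mx Cm (0 : 'M[C]_(p, 0))) D.
Proof.
case=> e; move: B D; case: m / e => B D; rewrite !castmx_id => -[T [[hT1 hT2] hA hB hD]].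
exists erefl; rewrite !castmx_id.
exists (block_mx T 0 0 (0 : 'M[C]_0)); split => //.
- split; first by rewrite adj_block !adj0 hT1.
  move=> v hv; rewrite -(vsubmxK v) adj_col mul_row_block !mulmx0 ?mul0mx !addr0.
  rewrite mul_row_col ?mulmx0 ?mul0mx ?addr0. apply: hT2.
  apply: contra hv => /eqP hu; rewrite -(vsubmxK v) hu (flatmx0 (dsubmx v)).
  by rewrite col_mx0.
- rewrite !adj_block !adj0 adj_col adj0 !mulmx_block mul_col_row.
  rewrite !mulmx0 !mul0mx !addr0 !add_block_mx !addr0 hA.
  by rewrite block_mx0.
- rewrite adj_row adj0 mul_block_col !mulmx0 !mul0mx !addr0 opp_col_mx -hB.
  by rewrite (flatmx0 (- 0)).
Qed.

Lemma left_eig k m (F : 'M[C]_k) (G : 'M[C]_(k, m)) (T : 'M[C]_k) (v : 'rV[C]_k) (l : C) :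
  posdef T -> F *m T + T *m adj F + G *m adj G = 0 -> v *m F = l *: v ->
  v != 0 -> 0 <= complex.Re l -> v *m G = 0.
Proof.
move=> [hT1 hT2] hA hF hv hl.
have hv' : adj v != 0.
  by apply: contra hv => /eqP h; rewrite -(adjK v) h adj0.
have hQ := hT2 _ hv'; rewrite adjK in hQ.
set Q := v *m T *m adj v in hQ.
have e1 : v *m (F *m T + T *m adj F + G *m adj G) *m adj v = 0.
  by rewrite hA mulmx0 mul0mx.
rewrite !mulmxDr !mulmxDl in e1.
have t1 : v *m (F *m T) *m adj v = l *: Q by rewrite mulmxA hF -!scalemxAl.
have t2 : v *m (T *m adj F) *m adj v = (l^*)%C *: Q.
  by rewrite (mulmxA v T) -mulmxA -adjM hF adjZ -scalemxAr.
have t3 : v *m (G *m adj G) *m adj v = adj (adj (v *m G)) *m adj (v *m G).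
  by rewrite adjK mulmxA -mulmxA -adjM.
rewrite t1 t2 t3 in e1.
move: (adj_vv (adj (v *m G))); rewrite mxE => hvv.
have := congr1 (fun M : 'M[C]_1 => M ord0 ord0) e1; rewrite /= !mxE hvv -mulrDl addcJ.
move/eqP; rewrite paddr_eq0; first last.
- by rewrite ler0c sqr_ge0.
- rewrite /Q mxE in hQ; apply: mulr_ge0; last exact: ltW.
  by apply: mulr_ge0; rewrite ?ler0c // ler0n.
case/andP=> _ /eqP /complexI /eqP; rewrite sqrf_eq0 => /eqP /vnorm_eq0 h.
by rewrite -(adjK (v *m G)) h adj0.
Qed.

Lemma cast_adj1 p m (e : p = m) (X : 'M[C]_(p, m)) :
  castmx (e, erefl m) X = 1%:M -> adj X *m X = 1%:M.
Proof. move: X; case: m / e => X; rewrite castmx_id => ->; by rewrite adj1 mul1mx. Qed.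
End Aux.

Theorem theorem6 (R : realType) (n nw nu ny nyt nz : nat)
  (P : plant R n nw nu ny nyt) (L : 'M[R[i]]_(nz, ny + nyt)) :
  plant_pr P ->
  unit_columns L -> adj L *m L = 1%:M ->
  controller_pr (trivial_controller R nu ny) /\
  (forall c : controller R nu ny,
     controller_pr c -> cl_internally_stable P c ->
     cl_internally_stable P (trivial_controller R nu ny) /\
     (cl_hinf P L (trivial_controller R nu ny) <= cl_hinf P L c)%E).
Proof.
move=> hP _ hL; split.
  exists ny, 0, 0, 1%:M; exists erefl; rewrite !castmx_id.
  exists 0; split.
  - split; first exact: adj0.
    by move=> v; rewrite (flatmx0 v) eqxx.
  - exact: flatmx0.
  - by rewrite [LHS]flatmx0 [RHS]flatmx0.
  - by rewrite /= -scalar_mx_block.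
move=> c hc hstab.
set tr := trivial_controller R nu ny.
have eA : cl_A P tr = block_mx (pF P) 0 0 (0 : 'M[R[i]]_0).
  by rewrite /cl_A /tr /= !mulmx0 !mul0mx addr0.
have eB : cl_B P tr = col_mx (row_mx (pGw P) (pGu P)) (0 : 'M[R[i]]_(0, nw + nu)).
  by rewrite /cl_B /tr /= !mulmx0 !mul0mx addr0 mulmx1 block_mxEv row_mx0.
have eC : cl_C P L tr = L *m row_mx (col_mx (pH P) (pHt P)) (0 : 'M[R[i]]_(ny + nyt, 0)).
  by rewrite /cl_C /tr /= !mulmx0 !mul0mx addr0 block_mxEh col_mx0.
have eD : cl_D P L tr = L *m block_mx (pK P) 0 (pKt P) (pKbar P).
  by rewrite /cl_D /tr /= !mulmx0 !mul0mx addr0 mulmx1.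
have hP' := pr_ext hP.
case: (hP) => e [T [hT hA _ hK]].
have htriv : cl_internally_stable P tr.
  rewrite /cl_internally_stable eA => l /eigenvalueP [v hv hv0].
  rewrite ltNge; apply/negP => hRe.
  move: hv hv0; rewrite -(hsubmxK v) (thinmx0 (rsubmx v)).
  set v1 := lsubmx v => hv hv0.
  rewrite mul_row_block !mulmx0 addr0 scale_row_mx in hv.
  case/eq_row_mx: hv => hv _.
  have hv1 : v1 != 0 by apply: contra hv0 => /eqP ->; rewrite row_mx0.
  have hG := left_eig hT hA hv hv1 hRe. rewrite mul_mx_row in hG; move/eqP: hG; rewrite row_mx_eq0 => /andP[_ /eqP hGu].
  have : eigenvalue (cl_A P c) l.
    apply/eigenvalueP; exists (row_mx v1 0).
      rewrite /cl_A mul_row_block !mul0mx !addr0 scale_row_mx scaler0.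
      rewrite mulmxDr !mulmxA hGu !mul0mx addr0 hv. by [].
    apply: contra hv1 => /eqP h; by move/eqP: h; rewrite row_mx_eq0 => /andP[].
  move=> hev; have := hstab l hev; move=> h; have := lt_le_trans h hRe; by rewrite ltxx.
split; first exact: htriv.
have [hKw hKy] : cKw c = 1%:M /\ cKy c = 0.
  case: hc => nut [Ht [Ktw [Kty [e' [T' [_ _ _ hK']]]]]].
  have enut : nut = ny by apply: (@addnI nu).
  subst nut; rewrite castmx_id [RHS]scalar_mx_block in hK'.
  by case/eq_block_mx: hK' => -> -> _ _.
have hD : adj (cl_D P L c) *m cl_D P L c = 1%:M.
  rewrite /cl_D hKy hKw !mulmx0 !mul0mx addr0 mulmx1 adjM -mulmxA (mulmxA (adj L)) hL.
  by rewrite mul1mx; exact: cast_adj1 hK.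
apply/ereal_supP => y [w [v [hv ->]]].
have -> : tf (cl_A P tr) (cl_B P tr) (cl_C P L tr) (cl_D P L tr) (Complex 0 w) =
   L *m tf (block_mx (pF P) 0 0 (0 : 'M[R[i]]_0))
          (col_mx (row_mx (pGw P) (pGu P)) (0 : 'M[R[i]]_(0, nw + nu)))
          (row_mx (col_mx (pH P) (pHt P)) (0 : 'M[R[i]]_(ny + nyt, 0)))
          (block_mx (pK P) 0 (pKt P) (pKbar P)) (Complex 0 w).
  by rewrite eA eB eC eD /tf mulmxDr !mulmxA.
rewrite vnorm_iso; last first.
  rewrite adjM -mulmxA (mulmxA (adj L)) hL mul1mx; apply: lossless hP' _.
  by apply: hurwitz_unit; rewrite -eA.
rewrite hv; exact: lower hstab hD hv.
Qed.
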